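(* Let $i\ge 3$ and $k\ge 3$ be integers. Then: (a) $g_1(F_i,F_{i+2},F_{i+k})=(2F_i-1)F_{i+2}-F_i$ whenever $k\ge i+2$; (b) $g_1(F_i,F_{i+2},F_{2i+1})=(F_{i-2}-1)F_{i+2}+F_{2i+1}-F_i$; (c) $g_1(F_i,F_{i+2},F_{2i})=(F_i-1)F_{i+2}+F_{2i}-F_i$; (d) if $r=\lfloor (F_i-1)/F_k\rfloor\ge 1$ (equivalently $k\le i-1$), then $$g_1(F_i,F_{i+2},F_{i+k})=\begin{cases}(F_i-rF_k-1)F_{i+2}+(r+1)F_{i+k}-F_i & \text{if } (F_i-rF_k)F_{i+2}\ge F_{k-2}F_i,\\ (F_k-1)F_{i+2}+rF_{i+k}-F_i & \text{if } (F_i-rF_k)F_{i+2}< F_{k-2}F_i.\end{cases}$$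
   Context: Fibonacci numbers: $F_0=0$, $F_1=1$, $F_n=F_{n-1}+F_{n-2}$. For positive integers $a_1,\dots,a_l$ with $\gcd(a_1,\dots,a_l)=1$ and an integer $n$, let $d(n;a_1,\dots,a_l)$ be the number of tuples $(x_1,\dots,x_l)$ of nonnegative integers with $a_1x_1+\dots+a_lx_l=n$. For a nonnegative integer $p$, the $p$-Frobenius number $g_p(a_1,\dots,a_l)$ is the largest integer $n$ with $d(n;a_1,\dots,a_l)\le p$. *)

(* Defs.v *)
From mathcomp Require Import all_boot all_order all_algebra.
Set Implicit Arguments.
Unset Strict Implicit.
Unset Printing Implicit Defensive.
Import Order.TTheory GRing.Theory Num.Theory.

Fixpoint fib (n : nat) : nat :=
  match n with
  | 0 => 0
  | m.+1 => match m with
            | 0 => 1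
            | k.+1 => fib m + fib k
            end
  end.

(* For n >= 0 and all
   a_i >= 1, every solution has x_i <= n, so the tuples range over
   {ffun 'I_l -> 'I_(n+1)} without loss. *)
Definition dcount (a : seq nat) (n : int) : nat :=
  match n with
  | Posz m =>
      #|[set x : {ffun 'I_(size a) -> 'I_m.+1} |
           \sum_(j < size a) nth 0 a j * x j == m]|
  | Negz _ => 0
  end.

Definition is_pFrobenius (p : nat) (a : seq nat) (g : int) : Prop :=
  (dcount a g <= p)%N /\ (forall n : int, (g < n)%R -> (p < dcount a n)%N).

(* Main.v *)
Require Import Defs.
From mathcomp Require Import all_boot all_order all_algebra zify ring.
Set Implicit Arguments.
Unset Strict Implicit.
Unset Printing Implicit Defensive.

Lemma cong (a b t0 x1 X W : nat) : 0 < a -> coprime a b -> t0 < a ->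
  x1*a + X*b = t0*b + a*W -> exists s, X = t0 + s*a /\ x1 + s*b = W.
Proof.
move=> ha cop ht e.
case: (leqP t0 X) => h.
- have : a %| (X - t0) * b + x1 * a.
    have -> : (X - t0) * b + x1 * a = a * W.
      rewrite mulnBl. have : t0 * b <= X * b by rewrite leq_mul2r h orbT.
      lia.
    by rewrite dvdn_mulr.
  have H1 : a %| x1 * a := dvdn_mull x1 (dvdnn a).
  rewrite (dvdn_addl _ H1) Gauss_dvdl // => /dvdnP [s hs].
  exists s; split; first lia.
  apply/eqP; rewrite -(eqn_pmul2l ha); apply/eqP.
  have : X * b = t0 * b + s * a * b by rewrite -mulnDl -hs subnKC // ltnW.
  nia.
- have : a %| (t0 - X) * b + a * W.
    have -> : (t0 - X) * b + a * W = x1 * a.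
      rewrite mulnBl. have : X * b <= t0 * b by rewrite leq_mul2r (ltnW h) orbT.
      lia.
    by rewrite dvdn_mull.
  have H1 : a %| a * W := dvdn_mulr W (dvdnn a).
  rewrite (dvdn_addl _ H1) Gauss_dvdl // => /dvdn_leq.
  have : 0 < t0 - X by rewrite subn_gt0.
  move=> H /(_ H). lia.
Qed.

Definition mk N (x1 x2 x3 : nat) : {ffun 'I_3 -> 'I_N.+1} :=
  [ffun j : 'I_3 => inord (nth 0 [:: x1; x2; x3] j)].

Lemma dcount3 a b c N : dcount [:: a; b; c] (Posz N) =
  #|[set x : {ffun 'I_3 -> 'I_N.+1} |
     a * x ord0 + b * x (inord 1) + c * x (inord 2) == N]|.
Proof.
rewrite /dcount /=; apply: eq_card => x; rewrite !inE.
rewrite !big_ord_recl big_ord0 /= addn0 addnA.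
have -> : lift ord0 (ord0 : 'I_2) = inord 1 by apply/val_inj; rewrite /= inordK.
have -> : lift ord0 (lift ord0 (ord0 : 'I_1)) = inord 2 by apply/val_inj; rewrite /= inordK.
by [].
Qed.

Lemma ord3 (j : 'I_3) : j = ord0 \/ j = inord 1 \/ j = inord 2.
Proof.
case: j => [[|[|[|m]]] Hm] //.
- by left; apply/val_inj.
- by right; left; apply/val_inj; rewrite /= inordK.
- by right; right; apply/val_inj; rewrite /= inordK.
Qed.

Lemma mkE N x1 x2 x3 : x1 <= N -> x2 <= N -> x3 <= N ->
  [/\ (mk N x1 x2 x3 ord0 : nat) = x1, (mk N x1 x2 x3 (inord 1) : nat) = x2
    & (mk N x1 x2 x3 (inord 2) : nat) = x3].
Proof.
move=> h1 h2 h3; rewrite !ffunE /= !inordK //=.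
Qed.

Lemma getx1 a m G N : 0 < a -> m <= G + a -> G < N -> m = N %[mod a] ->
  exists x1, x1 * a + m = N.
Proof.
move=> ha hm hN hmod.
have mN : m <= N.
  rewrite leqNgt; apply/negP => lt.
  have : a %| m - N by rewrite -eqn_mod_dvd ?(ltnW lt) // hmod.
  move/dvdn_leq; rewrite subn_gt0 => /(_ lt). lia.
have : a %| N - m by rewrite -eqn_mod_dvd // hmod.
move/dvdnP => [x1 hx]; exists x1; lia.
Qed.

Lemma frob (a b c G p2 p3 : nat) : 0 < a -> 0 < b -> 0 < c -> coprime a b ->
 (forall x1 x2 x3, x1*a + x2*b + x3*c = G -> x2 = p2 /\ x3 = p3) ->
 (forall t, t < a -> exists x2 x3 y2 y3,
    [/\ (x2 != y2) || (x3 != y3), x2*b + x3*c <= G + a, y2*b + y3*c <= G + a,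
        x2*b + x3*c = t*b %[mod a] & y2*b + y3*c = t*b %[mod a]]) ->
 is_pFrobenius 1 [:: a; b; c] (Posz G).
Proof.
move=> ha hb hc cop U E; split.
- rewrite dcount3; apply/card_le1_eqP => x y; rewrite !inE => /eqP hx /eqP hy.
  have hx' : x ord0 * a + x (inord 1) * b + x (inord 2) * c = G by rewrite ![x _ * _]mulnC.
  have hy' : y ord0 * a + y (inord 1) * b + y (inord 2) * c = G by rewrite ![y _ * _]mulnC.
  have [ux2 ux3] := U _ _ _ hx'.
  have [uy2 uy3] := U _ _ _ hy'.
  have e0 : (x ord0 : nat) = y ord0.
    apply/eqP; rewrite -(eqn_pmul2r ha); apply/eqP.
    move: hx' hy'; rewrite ux2 ux3 uy2 uy3. lia.
  apply/ffunP => j; apply/val_inj.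
  case: (ord3 j) => [->|[->|->]]; [exact: esym e0 | exact: (etrans uy2 (esym ux2)) | exact: (etrans uy3 (esym ux3))].
- move=> n; case: n => [N|m] hn; last by exfalso; move: hn.
  have hN : G < N by move: hn; rewrite ltz_nat.
  rewrite dcount3.
  case: (@egcdnP b a hb) => km kn hkm _.
  have g1 : gcdn b a = 1 by rewrite gcdnC; apply/eqP.
  rewrite g1 in hkm.
  set t := (N * km) %% a.
  have ht : t < a by rewrite ltn_pmod.
  have htb : t * b = N %[mod a].
    rewrite /t modnMml -mulnA hkm mulnDr muln1 mulnA modnMDl //.
  have [x2 [x3 [y2 [y3 [neq hxm hym hxmod hymod]]]]] := E t ht.
  have [x1 ex] := getx1 ha hxm hN (etrans hxmod htb).
  have [y1 ey] := getx1 ha hym hN (etrans hymod htb).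
  have b1 : forall u v, 0 < v -> u * v <= N -> u <= N.
    move=> u v hv huv; apply: leq_trans huv; exact: leq_pmulr.
  have [x1E x2E x3E] : [/\ (mk N x1 x2 x3 ord0 : nat) = x1, (mk N x1 x2 x3 (inord 1) : nat) = x2
    & (mk N x1 x2 x3 (inord 2) : nat) = x3].
    apply: mkE; [apply: (b1 _ a) | apply: (b1 _ b) | apply: (b1 _ c)] => //; clear -ex; lia.
  have [y1E y2E y3E] : [/\ (mk N y1 y2 y3 ord0 : nat) = y1, (mk N y1 y2 y3 (inord 1) : nat) = y2
    & (mk N y1 y2 y3 (inord 2) : nat) = y3].
    apply: mkE; [apply: (b1 _ a) | apply: (b1 _ b) | apply: (b1 _ c)] => //; clear -ey; lia.
  apply/card_gt1P; exists (mk N x1 x2 x3), (mk N y1 y2 y3); split.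
  + by rewrite inE x1E x2E x3E; apply/eqP; clear -ex; lia.
  + by rewrite inE y1E y2E y3E; apply/eqP; clear -ey; lia.
  + apply/negP => /eqP exy.
    have e2 : x2 = y2 by rewrite -x2E -y2E exy.
    have e3 : x3 = y3 by rewrite -x3E -y3E exy.
    by move: neq; rewrite e2 e3 !eqxx.
Qed.

Unset Implicit Arguments.
Set Strict Implicit.

Lemma fibSS n : fib n.+2 = fib n.+1 + fib n.
Proof. by []. Qed.

Lemma fib_id i k : fib (i + k.+2) + fib k * fib i = fib k.+2 * fib i.+2 /\
   fib (i + k.+3) + fib k.+1 * fib i = fib k.+3 * fib i.+2.
Proof.
elim: k => [|k [IH1 IH2]].
- rewrite !addnS addn0 !fibSS /=. lia.
- split; first by [].
  rewrite !addnS in IH1 IH2 *.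
  rewrite (fibSS (i + k).+2) (fibSS k.+2) (fibSS k).
  move: IH1 IH2; rewrite (fibSS k.+1) (fibSS k). nia.
Qed.

Lemma fib_le n : fib n <= fib n.+1.
Proof. by case: n => [|n] //; rewrite fibSS leq_addr. Qed.

Lemma fib_mono m n : m <= n -> fib m <= fib n.
Proof.
move=> /subnK <-; elim: (n - m) => [|j IH] //.
by rewrite addSn; apply: (@leq_trans (fib (j+m))) => //; apply: fib_le.
Qed.

Lemma fib_pos n : 0 < n -> 0 < fib n.
Proof. move=> h; exact: (leq_trans _ (fib_mono 1 n h)). Qed.

Lemma fib_cop n : coprime (fib n) (fib n.+1).
Proof.
elim: n => [|n IH] //.
by rewrite /coprime fibSS gcdnDl gcdnC.
Qed.

Lemma fib_cop2 n : coprime (fib n) (fib n.+2).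
Proof. rewrite /coprime fibSS gcdnDr; exact: fib_cop. Qed.


Lemma modE m t b a k : m = t*b + a*k -> m = t*b %[mod a].
Proof. by move=> ->; rewrite addnC [a*k]mulnC modnMDl. Qed.

Lemma caseC a b e c : 0 < a -> e < b -> coprime a b -> c + e*a = a*b ->
  is_pFrobenius 1 [:: a; b; c] (Posz ((a-1)*b + a*(b-e-1))).
Proof.
move=> ha heb cop hc.
set d := b - e.
have bE : b = e + d by rewrite /d; lia.
have cE : c = a * d by rewrite bE mulnDr in hc; lia.
have hd : 0 < d by rewrite /d; lia.
apply: (@frob _ _ _ _ (a-1) 0) => //.
- lia.
- rewrite cE muln_gt0 ha hd //.
- move=> x1 x2 x3 h.
  have h' : (x1 + x3 * d) * a + x2 * b = (a-1) * b + a * (b - e - 1).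
    rewrite -h cE; nia.
  have ha1 : a - 1 < a by lia.
  have [s [hs1 hs2]] := cong ha cop ha1 h'.
  have hx3 : x3 = 0.
    case: x3 hs2 {h h'} => // x3 hs2; exfalso; rewrite -/d in hs2; nia.
  have hs : s = 0.
    case: s hs2 {h h' hs1} => // s hs2; exfalso; rewrite -/d in hs2; nia.
  by rewrite hs1 hs hx3; split => //; lia.
- move=> t ht; exists t, 0, t, 1.
  split; [by rewrite orbT | nia | rewrite cE; nia | by rewrite mul0n addn0 | by apply: modE; rewrite mul1n cE].
Qed.

Lemma caseA a b c : 0 < a -> 0 < b -> coprime a b -> (a-1)*b + a*(b-1) < c ->
  is_pFrobenius 1 [:: a; b; c] (Posz ((a-1)*b + a*(b-1))).
Proof.
move=> ha hb cop hc.
apply: (@frob _ _ _ _ (a-1) 0) => //.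
- exact: leq_ltn_trans (leq0n _) hc.
- move=> x1 x2 x3 h.
  have hx3 : x3 = 0.
    case: x3 h => // x3 h; exfalso; nia.
  rewrite hx3 mul0n addn0 in h.
  have ha1 : a - 1 < a by lia.
  have [s [hs1 hs2]] := cong ha cop ha1 h.
  have hs : s = 0.
    case: s hs2 {h hs1} => // s hs2; exfalso; nia.
  by rewrite hs1 hs hx3; split => //; lia.
- move=> t ht; exists t, 0, (t + a), 0.
  split; [apply/orP; left; apply/eqP; lia | nia | nia | by rewrite mul0n addn0 | ].
  by apply: modE; rewrite mul0n addn0 mulnDl mulnC.
Qed.

Lemma caseB a b h d c : a = h + d -> b = 2*a + h -> h <= 2*d -> 0 < d -> 0 < h ->
  coprime a b -> c + h*a = (a+h)*b ->
  is_pFrobenius 1 [:: a; b; c] (Posz ((a-1)*b + a*(b-h-1))).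
Proof.
move=> aE bE hd d1 h1 cop hc.
have ha : 0 < a by lia.
set w := b - h.
have wE : w = 2 * a by rewrite /w; lia.
have cE : c = h * b + a * w.
  rewrite wE; apply/eqP; rewrite -(eqn_add2r (h*a)) hc; apply/eqP.
  rewrite bE; nia.
apply: (@frob _ _ _ _ (a-1) 0) => //.
- lia.
- rewrite cE; apply: ltn_addr; rewrite muln_gt0 h1; lia.
- move=> x1 x2 x3 e.
  have e' : (x1 + x3 * w) * a + (x2 + x3 * h) * b = (a-1) * b + a * (w - 1).
    rewrite -e cE; nia.
  have ha1 : a - 1 < a by lia.
  have [s [hs1 hs2]] := cong ha cop ha1 e'.
  have hx3 : x3 = 0.
    case: x3 hs2 {e e' hs1} => // x3 hs2; exfalso.
    have : w <= x3.+1 * w by apply: leq_pmull.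
    lia.
  have hs : s = 0.
    case: s hs2 {e e' hs1} => // s hs2; exfalso.
    have : b <= s.+1 * b by apply: leq_pmull.
    lia.
  rewrite hx3 hs in hs1; split => //; lia.
- move=> t ht.
  have tb : t * b <= (a-1) * b by rewrite leq_mul2r; apply/orP; right; lia.
  case: (leqP h t) => hht.
  + exists t, 0, (t - h), 1.
    have yE : (t - h) * b + 1 * c = t * b + a * w.
      rewrite cE mul1n addnA -mulnDl subnK //.
    split; [by rewrite orbT | lia | lia | by rewrite mul0n addn0 | ].
    apply: (@modE _ _ _ _ w); exact yE.
  + exists t, 0, (t + a), 0.
    have hb2 : h * b <= a * w.
      rewrite wE bE aE. nia.
    have tb2 : (t + 1) * b <= h * b by rewrite leq_mul2r; apply/orP; right; lia.
    split; [apply/orP; left; apply/eqP; lia | lia | | by rewrite mul0n addn0 | ].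
    * rewrite mul0n addn0.
      have e1 : (t + a) * b = (t + 1) * b + (a - 1) * b by rewrite -mulnDl; congr (_ * _); lia.
      have e2 : a * (w - 1) + a = a * w by rewrite -mulnSr; congr (_ * _); lia.
      lia.
    * by apply: modE; rewrite mul0n addn0 mulnDl mulnC.
Qed.


Lemma modS m t b a k : m + a*k = t*b -> m = t*b %[mod a].
Proof. by move=> <-; rewrite addnC [a*k]mulnC modnMDl. Qed.

Section D.
Variables (a b f e c r v : nat).
Hypotheses (aE : a = r*f + v) (v1 : 0 < v) (vf : v <= f) (r1 : 0 < r)
  (ef : 2*e <= f) (e1 : 0 < e) (ab : 2*a <= b) (afb : a + f < b) (cop : coprime a b)
  (hc : c + e*a = f*b).

Lemma Dfacts : [/\ (r+1)*e < b, e*f < c, 4*(e*a) <= f*b, a <= (r+1)*f & f < a].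
Proof.
have h1 : 2*((r+1)*e) <= (r+1)*f by rewrite mulnCA leq_mul2l ef orbT.
have h2 : e*a <= f*a by rewrite leq_mul2r; apply/orP; right; lia.
have h3 : f*(a+f+1) <= f*b by rewrite leq_mul2l; apply/orP; right; lia.
have h4 : e*f <= f*f by rewrite leq_mul2r; apply/orP; right; lia.
have h5 : (2*e)*(2*a) <= f*b by apply: leq_mul.
split.
- have : (r+1)*f = r*f + f by rewrite mulnDl mul1n. lia.
- have : f*(a+f+1) = f*a + f*f + f by rewrite !mulnDr muln1. lia.
- have : (2*e)*(2*a) = 4*(e*a) by rewrite mulnACA. lia.
- have : (r+1)*f = r*f + f by rewrite mulnDl mul1n. lia.
- have : f <= r * f by rewrite leq_pmull. lia.
Qed.

Lemma existD M t : t < a ->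
  (a+f-1)*b <= M + (r+1)*e*a -> (v < f -> (a+f-v-1)*b <= M + r*e*a) ->
  exists x2 x3 y2 y3,
    [/\ (x2 != y2) || (x3 != y3), x2*b + x3*c <= M, y2*b + y3*c <= M,
        x2*b + x3*c = t*b %[mod a] & y2*b + y3*c = t*b %[mod a]].
Proof.
move=> ht HM1 HM2.
have [F1 F2 F3 F4 F5] := Dfacts.
have hcm : forall x, x * c + x * e * a = x * f * b.
  by move=> x; rewrite -mulnA -mulnDr hc mulnA.
have ba : (r+1)*e*a <= a*b.
  rewrite mulnC leq_mul2l; apply/orP; right; exact: ltnW.
case: (ltnP t f) => htf.
- have tb1 : t * b <= (f-1)*b by rewrite leq_mul2r; apply/orP; right; lia.
  have tb2 : (f-1)*b + a*b = (a+f-1)*b by rewrite -mulnDl; congr (_ * _); lia.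
  case: (leqP f (t + v)) => htv.
  + exists t, 0, (t + v - f), (r+1).
    have tE : t + a = (t + v - f) + (r+1)*f by rewrite aE mulnDl mul1n; lia.
    have yE : (t + v - f) * b + (r+1) * c + (r+1)*e*a = (t + a) * b.
      have := hcm (r+1). rewrite tE mulnDl. set n := t + v - f. lia.
    have ta : (t + a) * b <= (a+f-1)*b by rewrite leq_mul2r; apply/orP; right; lia.
    have kE : a*(b - (r+1)*e) = a*b - (r+1)*e*a by rewrite mulnBr [(r+1)*e*a]mulnC.
    have tab : (t + a) * b = t * b + a * b by rewrite mulnDl.
    split; [by rewrite addn1 orbT | lia | lia | by rewrite mul0n addn0 | ].
    apply: (@modE _ _ _ _ ((b - (r+1)*e))).
    rewrite kE. move: yE tab ba. set n := t + v - f. clear. nia.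
  + exists t, 0, (t + v), r.
    have hv : v < f by lia.
    have tE : t + a = (t + v) + r*f by rewrite aE; lia.
    have yE : (t + v) * b + r * c + r*e*a = (t + a) * b.
      have := hcm r. rewrite tE mulnDl. lia.
    have ta : (t + a) * b <= (a+f-v-1)*b by rewrite leq_mul2r; apply/orP; right; lia.
    have HM2' := HM2 hv.
    have kE : a*(b - r*e) = a*b - r*e*a by rewrite mulnBr [r*e*a]mulnC.
    have ra : r*e*a <= (r+1)*e*a by rewrite leq_mul2r; apply/orP; right; rewrite leq_mul2r; apply/orP; right; lia.
    have tab : (t + a) * b = t * b + a * b by rewrite mulnDl.
    split; [by rewrite [0 == r]eq_sym -lt0n r1 orbT | lia | lia | by rewrite mul0n addn0 | ].
    apply: (@modE _ _ _ _ ((b - r*e))).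
    rewrite kE. move: yE tab ba ra. clear. nia.
- set q := t %/ f. set u := t %% f.
  have tE : t = q * f + u by rewrite /q /u -divn_eq.
  have f0 : 0 < f by lia.
  have q1 : 0 < q by rewrite /q divn_gt0.
  have uf : u < f by rewrite /u ltn_mod.
  clearbody q u.
  have qr : q <= r.
    have : q * f < (r+1) * f by lia.
    rewrite ltn_mul2r f0 /= => ?; lia.
  exists u, q, (u + f), (q - 1).
  have x1E : u * b + q * c + a * (q * e) = t * b.
    rewrite tE; move: (hcm q); clear; nia.
  have x2E : (u + f) * b + (q - 1) * c + a * ((q - 1) * e) = t * b.
    have : (u + f) + (q - 1) * f = t.
      rewrite tE; have -> : q * f = (q - 1) * f + f by rewrite -mulSnr; congr (_ * _); lia.
      lia.
    move=> <-; move: (hcm (q-1)) q1; clear; nia.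
  have qq : a * ((q - 1) * e) <= a * (q * e).
    rewrite leq_mul2l; apply/orP; right; rewrite leq_mul2r; apply/orP; right; lia.
  have K : t * b + (r+1)*e*a <= (a+f-1)*b + (q-1)*e*a.
    have af : (a + f - 1) * b = (a - 1) * b + f * b by rewrite -mulnDl; congr (_ * _); lia.
    rewrite af.
    case: (ltnP q r) => hqr.
    + set j := r - q.
      have rE : r = q + j by rewrite /j; lia.
      have A1 : (t+1)*b <= (q+1)*f*b by rewrite leq_mul2r; apply/orP; right; rewrite tE; nia.
      have A2 : (r*f + f)*b <= (a - 1) * b + f * b.
        rewrite -mulnDl leq_mul2r; apply/orP; right; lia.
      have A3 : j*(4*(e*a)) <= j*(f*b) by rewrite leq_mul2l F3 orbT.
      have A4 : (j+2)*(e*a) <= (4*j)*(e*a) by rewrite leq_mul2r; apply/orP; right; lia.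
      have j1 : 0 < j by rewrite /j; lia.
      move: A1 A2 A3 A4 q1 j1. rewrite rE. clear. nia.
    + have qE : q = r by lia.
      have A1 : t * b <= (a-1) * b by rewrite leq_mul2r; apply/orP; right; lia.
      move: A1 F3 q1. rewrite qE. clear. nia.
  have K2 : (q-1)*e*a = a * ((q - 1) * e) by rewrite mulnC mulnA.
  split; [by rewrite ltn_eqF ?orbT //; lia | lia | lia | | ].
  + by apply: (@modS _ _ _ _ (q*e)).
  + by apply: (@modS _ _ _ _ ((q-1)*e)).
Qed.

Lemma hcmD x : x * c + x * e * a = x * f * b.
Proof. by rewrite -mulnA -mulnDr hc mulnA. Qed.

Lemma uniq1 x1 x2 x3 : x1*a + x2*b + x3*c = (f-1)*b + a*(b - (r+1)*e - 1) ->
  x2 = f-1 /\ x3 = 0.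
Proof.
move=> h.
have [F1 F2 F3 F4 F5] := Dfacts.
set W := b - (r+1)*e - 1 in h.
have WE : W + (r+1)*e + 1 = b by rewrite /W; lia.
clearbody W.
have h' : x1*a + (x2 + x3*f)*b = (f-1)*b + a*(W + x3*e).
  move: (hcmD x3) h; clear; nia.
have t0a : f - 1 < a by lia.
have ha : 0 < a by lia.
have [s [hs1 hs2]] := cong ha cop t0a h'.
case: s hs1 hs2 => [|[|s]] hs1 hs2.
- have hx3 : x3 = 0.
    case: x3 hs1 {h h' hs2} => // x3 hs1; exfalso; nia.
  rewrite hx3 in hs1; split => //; lia.
- exfalso.
  have : x3 * f < (r+2) * f.
    have : (r+2)*f = (r+1)*f + f by rewrite -mulSnr; congr (_ * _); lia.
    lia.
  rewrite ltn_mul2r => /andP [_ hx3].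
  have : x3 * e <= (r+1) * e by rewrite leq_mul2r; apply/orP; right; lia.
  lia.
- exfalso.
  have P0 : s.+2 * b + (r+1)*e + 1 <= b + x3*e by lia.
  have P1 : f*(s.+2 * b + (r+1)*e + 1) <= f*(b + x3*e) by rewrite leq_mul2l P0 orbT.
  have P2 : e*(x3*f + 1) <= e*(f + s.+2*a) by rewrite leq_mul2l; apply/orP; right; lia.
  have P3 : e*a <= e*((r+1)*f) by rewrite leq_mul2l F4 orbT.
  have P6 : s.+2*(f*b) = s.+2*(c + e*a) by rewrite hc.
  move: P1 P2 P3 P6 F2; clear; nia.
Qed.

Lemma uniq2 x1 x2 x3 : v < f -> x1*a + x2*b + x3*c = (f-v-1)*b + a*(b - r*e - 1) ->
  x2 = f-v-1 /\ x3 = 0.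
Proof.
move=> hv h.
have [F1 F2 F3 F4 F5] := Dfacts.
have F1' : r * e < b by apply: leq_ltn_trans F1; rewrite leq_mul2r; apply/orP; right; lia.
set W := b - r*e - 1 in h.
have WE : W + r*e + 1 = b by rewrite /W; lia.
clearbody W.
have h' : x1*a + (x2 + x3*f)*b = (f-v-1)*b + a*(W + x3*e).
  move: (hcmD x3) h; clear; nia.
have t0a : f - v - 1 < a by lia.
have ha : 0 < a by lia.
have [s [hs1 hs2]] := cong ha cop t0a h'.
case: s hs1 hs2 => [|[|s]] hs1 hs2.
- have hx3 : x3 = 0.
    case: x3 hs1 {h h' hs2} => // x3 hs1; exfalso; nia.
  rewrite hx3 in hs1; split => //; lia.
- exfalso.
  have : x3 * f < (r+1) * f.
    have : (r+1)*f = r*f + f by rewrite mulnDl mul1n.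
    lia.
  rewrite ltn_mul2r => /andP [_ hx3].
  have : x3 * e <= r * e by rewrite leq_mul2r; apply/orP; right; lia.
  lia.
- exfalso.
  have P0 : s.+2 * b + r*e + 1 <= b + x3*e by lia.
  have P1 : f*(s.+2 * b + r*e + 1) <= f*(b + x3*e) by rewrite leq_mul2l P0 orbT.
  have P2 : e*(x3*f + v + 1) <= e*(f + s.+2*a) by rewrite leq_mul2l; apply/orP; right; lia.
  have P3 : e*a = e*(r*f) + e*v by rewrite aE mulnDr.
  have P6 : s.+2*(f*b) = s.+2*(c + e*a) by rewrite hc.
  move: P1 P2 P3 P6 F2; clear; nia.
Qed.

Lemma caseD1 : e*a <= v*b ->
  is_pFrobenius 1 [:: a; b; c] (Posz ((f-1)*b + a*(b - (r+1)*e - 1))).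
Proof.
move=> hev.
have [F1 F2 F3 F4 F5] := Dfacts.
have ha : 0 < a by lia.
apply: (@frob _ _ _ _ (f-1) 0) => //.
- lia.
- lia.
- exact: uniq1.
- move=> t ht; apply: existD => //.
  + have e1' : (a+f-1)*b = (f-1)*b + a*b by rewrite -mulnDl; congr (_ * _); lia.
    have e2 : a*(b - (r+1)*e - 1) + a + (r+1)*e*a = a*b.
      rewrite -mulnSr [(r+1)*e*a]mulnC -mulnDr; congr (_ * _); lia.
    lia.
  + move=> hv.
    have e1' : (a+f-1)*b = (a+f-v-1)*b + v*b by rewrite -mulnDl; congr (_ * _); lia.
    have e1'' : (a+f-1)*b = (f-1)*b + a*b by rewrite -mulnDl; congr (_ * _); lia.
    have e2 : a*(b - (r+1)*e - 1) + a + (r+1)*e*a = a*b.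
      rewrite -mulnSr [(r+1)*e*a]mulnC -mulnDr; congr (_ * _); lia.
    have e3 : (r+1)*e*a = r*e*a + e*a by rewrite -!mulnA mulnDl mul1n.
    lia.
Qed.

Lemma caseD2 : v*b < e*a ->
  is_pFrobenius 1 [:: a; b; c] (Posz ((f-v-1)*b + a*(b - r*e - 1))).
Proof.
move=> hev.
have [F1 F2 F3 F4 F5] := Dfacts.
have ha : 0 < a by lia.
have hv : v < f.
  have : e*a < f*b by lia.
  move=> H; rewrite ltnNge; apply/negP => fv.
  have : f*b <= v*b by rewrite leq_mul2r fv orbT.
  lia.
have F1' : r * e < b by apply: leq_ltn_trans F1; rewrite leq_mul2r; apply/orP; right; lia.
apply: (@frob _ _ _ _ (f-v-1) 0) => //.
- lia.
- lia.
- move=> x1 x2 x3; exact: uniq2.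
- move=> t ht; apply: existD => //.
  + have e1' : (a+f-1)*b = (f-v-1)*b + a*b + v*b by rewrite -!mulnDl; congr (_ * _); lia.
    have e2 : a*(b - r*e - 1) + a + r*e*a = a*b.
      rewrite -mulnSr [r*e*a]mulnC -mulnDr; congr (_ * _); lia.
    have e3 : (r+1)*e*a = r*e*a + e*a by rewrite -!mulnA mulnDl mul1n.
    lia.
  + move=> _.
    have e1' : (a+f-v-1)*b = (f-v-1)*b + a*b by rewrite -!mulnDl; congr (_ * _); lia.
    have e2 : a*(b - r*e - 1) + a + r*e*a = a*b.
      rewrite -mulnSr [r*e*a]mulnC -mulnDr; congr (_ * _); lia.
    lia.
Qed.

End D.

Import Order.TTheory GRing.Theory Num.Theory.
Import Order.TTheory GRing.Theory Num.Theory.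

Lemma fibS2 n : 2 <= n -> fib n = fib (n-1) + fib (n-2).
Proof. case: n => [|[|n]] // _; rewrite fibSS; congr (fib _ + fib _); lia. Qed.

Lemma fid i k : 2 <= k -> fib (i + k) + fib (k-2) * fib i = fib k * fib (i+2).
Proof.
move=> hk; have := (fib_id i (k-2)).1.
have e : (k-2).+2 = k by lia.
by rewrite e addn2.
Qed.

Lemma toPosz (z : int) (X Y G : nat) : (X = G + Y)%N -> z = (Posz X - Posz Y)%R -> z = Posz G.
Proof. by move=> -> ->; rewrite PoszD GRing.addrK. Qed.

Lemma partD (a b f e c r : nat) : 0 < r -> r*f <= a.-1 -> a.-1 < r.+1 * f ->
  2*e <= f -> 0 < e -> 2*a <= b -> a + f < b -> coprime a b -> c + e*a = f*b ->
  ((e%:Z * a%:Z <= (a%:Z - r%:Z * f%:Z) * b%:Z)%R ->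
     is_pFrobenius 1 [:: a; b; c]
       ((a%:Z - r%:Z * f%:Z - 1) * b%:Z + (r%:Z + 1) * c%:Z - a%:Z)%R) /\
  (((a%:Z - r%:Z * f%:Z) * b%:Z < e%:Z * a%:Z)%R ->
     is_pFrobenius 1 [:: a; b; c]
       ((f%:Z - 1) * b%:Z + r%:Z * c%:Z - a%:Z)%R).
Proof.
move=> r1 rf1 rf2 ef e1 ab afb cop hc.
rewrite -!subn1 in rf1 rf2.
have frf : f <= r * f by rewrite leq_pmull.
have ha : 0 < a by lia.
set v := a - r * f.
have aE : a = r * f + v by rewrite /v; lia.
have v1 : 0 < v by rewrite /v; lia.
have vf : v <= f.
  have : a <= r.+1 * f by lia.
  rewrite mulSn /v; lia.
clearbody v.
have [F1 F2 F3 F4 F5] := @Dfacts a b f e c r v aE v1 vf r1 ef e1 ab afb cop hc.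
have vZ : (a%:Z - r%:Z * f%:Z = v%:Z)%R by rewrite aE PoszD PoszM GRing.addrAC GRing.subrr GRing.add0r.
have rc : (r+1)*c + (r+1)*e*a = (r+1)*f*b by rewrite -mulnA -mulnDr hc mulnA.
split.
- move=> H0; have H : e * a <= v * b by move: H0; rewrite vZ -!PoszM lez_nat.
  have E : ((a%:Z - r%:Z * f%:Z - 1) * b%:Z + (r%:Z + 1) * c%:Z - a%:Z)%R
     = Posz ((f-1)*b + a*(b - (r+1)*e - 1)).
    apply: (@toPosz _ (v * b + (r+1) * c) (b + a)).
      have W : b - (r+1)*e - 1 + (r+1)*e + 1 = b by lia.
      move: W rc aE F1 v1 vf ha. move: (b - (r+1)*e - 1) => W.
      clear. nia.
    rewrite vZ !PoszD !PoszM. ring.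
  rewrite E. exact: (@caseD1 a b f e c r v).
- move=> H0; have H : v * b < e * a by move: H0; rewrite vZ -!PoszM ltz_nat.
  have hv : v < f.
    rewrite ltnNge; apply/negP => fv.
    have : f*b <= v*b by rewrite leq_mul2r fv orbT.
    lia.
  have F1' : r * e < b by apply: leq_ltn_trans F1; rewrite leq_mul2r; apply/orP; right; lia.
  have rc' : r*c + r*e*a = r*f*b by rewrite -mulnA -mulnDr hc mulnA.
  have E : ((f%:Z - 1) * b%:Z + r%:Z * c%:Z - a%:Z)%R
     = Posz ((f-v-1)*b + a*(b - r*e - 1)).
    apply: (@toPosz _ (f * b + r * c) (b + a)).
      have W : b - r*e - 1 + r*e + 1 = b by lia.
      have V : f - v - 1 + v + 1 = f by lia.
      move: W V rc' aE. move: (b - r*e - 1) (f - v - 1) => W V.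
      clear. nia.
    rewrite !PoszD !PoszM. ring.
  rewrite E. exact: (@caseD2 a b f e c r v).
Qed.

Local Open Scope ring_scope.

Theorem theorem2 (i k : nat) (hi : (3 <= i)%N) (hk : (3 <= k)%N) :
  (* (a) *)
  ((i + 2 <= k)%N ->
     is_pFrobenius 1 [:: fib i; fib (i + 2); fib (i + k)]
       ((2 * (fib i)%:Z - 1) * (fib (i + 2))%:Z - (fib i)%:Z)) /\
  (* (b) *)
  is_pFrobenius 1 [:: fib i; fib (i + 2); fib (2 * i + 1)]
    (((fib (i - 2))%:Z - 1) * (fib (i + 2))%:Z + (fib (2 * i + 1))%:Z
       - (fib i)%:Z) /\
  (* (c) *)
  is_pFrobenius 1 [:: fib i; fib (i + 2); fib (2 * i)]
    (((fib i)%:Z - 1) * (fib (i + 2))%:Z + (fib (2 * i))%:Z - (fib i)%:Z) /\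
  (* (d) *)
  (let r := ((fib i).-1 %/ fib k)%N in
   (1 <= r)%N ->
   ((fib (k - 2))%:Z * (fib i)%:Z
       <= ((fib i)%:Z - r%:Z * (fib k)%:Z) * (fib (i + 2))%:Z ->
     is_pFrobenius 1 [:: fib i; fib (i + 2); fib (i + k)]
       (((fib i)%:Z - r%:Z * (fib k)%:Z - 1) * (fib (i + 2))%:Z
          + (r%:Z + 1) * (fib (i + k))%:Z - (fib i)%:Z)) /\
   (((fib i)%:Z - r%:Z * (fib k)%:Z) * (fib (i + 2))%:Z
       < (fib (k - 2))%:Z * (fib i)%:Z ->
     is_pFrobenius 1 [:: fib i; fib (i + 2); fib (i + k)]
       (((fib k)%:Z - 1) * (fib (i + 2))%:Z
          + r%:Z * (fib (i + k))%:Z - (fib i)%:Z))).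
Proof.
have aE : fib i = (fib (i-1) + fib (i-2))%N by apply: fibS2; lia.
have bE : fib (i+2) = (2 * fib i + fib (i-1))%N.
  rewrite fibS2; last lia.
  rewrite (_ : (i + 2 - 1 = i.+1)%N); last lia.
  rewrite (_ : (i + 2 - 2 = i)%N); last lia.
  rewrite (fibS2 (i.+1)); last lia.
  rewrite (_ : (i.+1 - 1 = i)%N); last lia.
  rewrite (_ : (i.+1 - 2 = i - 1)%N); last lia.
  lia.
have d1 : (0 < fib (i-2))%N by apply: fib_pos; lia.
have dh : (fib (i-2) <= fib (i-1))%N by apply: fib_mono; lia.
have h2d : (fib (i-1) <= 2 * fib (i-2))%N.
  rewrite (fibS2 (i-1)); last lia.
  rewrite (_ : (i - 1 - 1 = i - 2)%N); last lia.
  have : (fib (i - 1 - 2) <= fib (i-2))%N by apply: fib_mono; lia.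
  lia.
have cop : coprime (fib i) (fib (i+2)) by rewrite addn2; exact: fib_cop2.
split; [|split; [|split]].
- move=> hik.
  have i2 : (2 <= i + 2)%N by lia.
  have hc := fid i (i+2) i2.
  rewrite addnK in hc.
  have cm : (fib (i + (i+2)) <= fib (i + k))%N by apply: fib_mono; lia.
  have Hc : ((fib i - 1) * fib (i+2) + fib i * (fib (i+2) - 1) < fib (i+k))%N.
    move: hc cm aE bE d1 dh.
    move: (fib (i+k)) (fib (i+(i+2))) (fib (i+2)) (fib i) (fib (i-1)) (fib (i-2)).
    clear => c X b a h d hc cm aE bE d1 dh.
    have K : (a*a + 2*(a*b) <= b*b)%N.
      rewrite bE aE. have : (d * d <= h * h)%N by apply: leq_mul. nia.
    have K2 : ((a - 1) * b + a * (b - 1) < 2 * (a * b))%N.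
      have : (0 < a)%N by lia. have : (0 < b)%N by lia. nia.
    lia.
  have E : (2 * (fib i)%:Z - 1) * (fib (i + 2))%:Z - (fib i)%:Z
     = Posz ((fib i - 1) * fib (i+2) + fib i * (fib (i+2) - 1))%N.
    move: aE bE d1 dh.
    move: (fib (i+2)) (fib i) (fib (i-1)) (fib (i-2)).
    clear => b a h d aE bE d1 dh. nia.
  rewrite E; apply: caseA => //; lia.
- rewrite (_ : (2 * i + 1 = i + (i + 1))%N); last lia.
  have i2 : (2 <= i + 1)%N by lia.
  have hc := fid i (i+1) i2.
  rewrite (_ : (i + 1 - 2 = i - 1)%N) in hc; last lia.
  have fE : fib (i+1) = (fib i + fib (i-1))%N.
    have -> : (i + 1 = (i-1).+2)%N by lia.
    rewrite fibSS; congr (fib _ + _); lia.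
  rewrite fE in hc.
  have E : ((fib (i - 2))%:Z - 1) * (fib (i + 2))%:Z + (fib (i + (i + 1)))%:Z - (fib i)%:Z
     = Posz ((fib i - 1) * fib (i+2) + fib i * (fib (i+2) - fib (i-1) - 1))%N.
    move: hc aE bE d1 dh.
    move: (fib (i+(i+1))) (fib (i+2)) (fib i) (fib (i-1)) (fib (i-2)).
    clear => c b a h d hc aE bE d1 dh.
    apply: (@toPosz _ (d * b + c) (b + a)).
      have a1 : (1 <= a)%N by lia.
      have b1 : (h + 1 <= b)%N by lia.
      rewrite mulnBl mul1n !mulnBr muln1.
      have : (a * (h + 1) <= a * b)%N by rewrite leq_mul2l b1 orbT.
      have : (b <= a * b)%N by rewrite leq_pmull.
      nia.
    rewrite !PoszD !PoszM. ring.
  rewrite E; apply: (@caseB _ _ _ (fib (i-2))) => //; lia.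
- rewrite (_ : (2 * i = i + i)%N); last lia.
  have i2 : (2 <= i)%N by lia.
  have hc := fid i i i2.
  have E : ((fib i)%:Z - 1) * (fib (i + 2))%:Z + (fib (i + i))%:Z - (fib i)%:Z
     = Posz ((fib i - 1) * fib (i+2) + fib i * (fib (i+2) - fib (i-2) - 1))%N.
    move: hc aE bE d1 dh.
    move: (fib (i+i)) (fib (i+2)) (fib i) (fib (i-1)) (fib (i-2)).
    clear => c b a h d hc aE bE d1 dh. nia.
  rewrite E; apply: caseC => //; lia.
- intros r hr.
  have rdef : r = ((fib i).-1 %/ fib k)%N by [].
  have k2 : (2 <= k)%N by lia.
  have hc := fid i k k2.
  have fE : fib k = (fib (k-1) + fib (k-2))%N by apply: fibS2; lia.
  have ek : (fib (k-2) <= fib (k-1))%N by apply: fib_mono; lia.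
  have e1 : (0 < fib (k-2))%N by apply: fib_pos; lia.
  have f0 : (0 < fib k)%N by lia.
  have H1 : (r * fib k <= (fib i).-1)%N by rewrite rdef; exact: leq_trunc_div.
  have H2 : ((fib i).-1 < r.+1 * fib k)%N by rewrite rdef; exact: ltn_ceil.
  have H3 : (2 * fib (k-2) <= fib k)%N by lia.
  have H5 : (2 * fib i <= fib (i+2))%N by lia.
  have H6 : (fib i + fib k < fib (i+2))%N.
    have : (fib k <= r * fib k)%N by rewrite leq_pmull.
    move: H1; rewrite -subn1. lia.
  exact: (@partD (fib i) (fib (i+2)) (fib k) (fib (k-2)) (fib (i+k)) r hr H1 H2 H3 e1 H5 H6 cop hc).
Qed.
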